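(* Let $\mathcal B$ be a finite set of finite Cornish algebras of type $F=F^+\,\dot\cup\,F^-$ and let $\mathcal Y=\{D(\mathbf A)\mid\mathbf A\in\mathcal B\}$. Then the algebras in $\mathcal B$ are semi-primal and share a common ternary discriminator term provided: (i) each $\mathbb X\in\mathcal Y$ has no non-empty proper substructures; (ii) the set $F^-$ is non-empty; (iii) there exists a unary term $t$ in the signature $F$ such that $t^{\mathbb X}$ is constant for all $\mathbb X\in\mathcal Y$.
   Context: A Cornish algebra of type $F$: a bounded distributive lattice with unary operations $f^{\mathbf A}$ ($f\in F$), an endomorphism for $f\in F^+$ and a dual endomorphism for $f\in F^-$. A Cornish space of type $F$: a Priestley space with unary operations $f^{\mathbb X}$, continuous order-preserving for $f\in F^+$ and continuous order-reversing for $f\in F^-$. A substructure is a closed subset closed under all $f^{\mathbb X}$. $D(\mathbf A)$: the set of bounded-lattice homomorphisms from the lattice reduct of $\mathbf A$ to $\mathbf 2$, ordered pointwise, topology from $\{0,1\}^A$, with $f^{D(\mathbf A)}(x)=x\circ f^{\mathbf A}$ for $f\in F^+$ and $c\circ x\circ f^{\mathbf A}$ for $f\in F^-$ ($c$ Boolean complement). A unary term is a finite composite of symbols of $F$, interpreted in $\mathbb X$ as the corresponding composite of the maps $f^{\mathbb X}$. Semi-primal: finite algebra with a majority term such that every subalgebra of $\mathbf A^2$ is a product of subalgebras or the graph of the identity on a subalgebra. Sharing a common ternary discriminator term: one ternary term $t$ induces on each algebra the map $\tau(x,y,z)=x$ if $x\ne y$, $=z$ if $x=y$. *)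

(* Defs.v *)
From HB Require Import structures.
From mathcomp Require Import all_boot all_order.
Set Implicit Arguments. Unset Strict Implicit. Unset Printing Implicit Defensive.
Import Order.Theory.
Local Open Scope order_scope.

Section Cornish.
Variable F : Type.
Variable pos : F -> bool.   (* pos f = true iff f \in F^+, false iff f \in F^- *)

Section Alg.
Context {d : Order.disp_t} {L : finTBDistrLatticeType d}.
Variable op : F -> L -> L.

Definition is_cornish : Prop :=
  forall f, if pos f then
    [/\ forall a b, op f (a `&` b) = op f a `&` op f b,
        forall a b, op f (a `|` b) = op f a `|` op f b,
        op f \bot = \bot & op f \top = \top]
  else
    [/\ forall a b, op f (a `&` b) = op f a `|` op f b,
        forall a b, op f (a `|` b) = op f a `&` op f b,
        op f \bot = \top & op f \top = \bot].

Inductive term (V : Type) : Type :=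
  | tVar of V | tBot | tTop
  | tMeet of term V & term V | tJoin of term V & term V
  | tOp of F & term V.

Fixpoint teval (V : Type) (e : V -> L) (t : term V) : L :=
  match t with
  | tVar v => e v
  | tBot => \bot
  | tTop => \top
  | tMeet t1 t2 => teval e t1 `&` teval e t2
  | tJoin t1 t2 => teval e t1 `|` teval e t2
  | tOp f t1 => op f (teval e t1)
  end.

Definition env3 (x y z : L) : 'I_3 -> L :=
  fun i => match val i with 0 => x | 1 => y | _ => z end.

Definition is_majority_term (m : term 'I_3) : Prop :=
  forall x y : L, [/\ teval (env3 x x y) m = x,
                      teval (env3 x y x) m = x &
                      teval (env3 y x x) m = x].

Definition is_discriminator_term (t : term 'I_3) : Prop :=
  forall x y z : L, teval (env3 x y z) t = if x == y then z else x.

Definition subalg (S : {set L}) : Prop :=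
  [/\ \bot \in S, \top \in S,
      forall a b, a \in S -> b \in S -> a `&` b \in S,
      forall a b, a \in S -> b \in S -> a `|` b \in S &
      forall f a, a \in S -> op f a \in S].

Definition subalg2 (S : {set L * L}) : Prop :=
  [/\ (\bot, \bot) \in S, (\top, \top) \in S,
      forall p q, p \in S -> q \in S -> (p.1 `&` q.1, p.2 `&` q.2) \in S,
      forall p q, p \in S -> q \in S -> (p.1 `|` q.1, p.2 `|` q.2) \in S &
      forall f p, p \in S -> (op f p.1, op f p.2) \in S].

Definition semi_primal : Prop :=
  (exists m, is_majority_term m) /\
  forall S, subalg2 S ->
    (exists S1 S2, [/\ subalg S1, subalg S2 & S = setX S1 S2]) \/
    (exists S1, subalg S1 /\ S = [set (a, a) | a in S1]).

Definition dual_space : {set {ffun L -> bool}} :=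
  [set x : {ffun L -> bool} |
    [&& [forall a, forall b, x (a `&` b) == x a && x b],
        [forall a, forall b, x (a `|` b) == x a || x b],
        x \bot == false & x \top == true]].

Definition dual_op (f : F) (x : {ffun L -> bool}) : {ffun L -> bool} :=
  [ffun a => if pos f then x (op f a) else ~~ x (op f a)].

(* substructures of D(A); D(A) is finite, hence discrete, so every subset
   is closed *)
Definition substructure (Y : {set {ffun L -> bool}}) : Prop :=
  Y \subset dual_space /\ forall f x, x \in Y -> dual_op f x \in Y.

Definition no_proper_nonempty_substructure : Prop :=
  forall Y, substructure Y -> Y = set0 \/ Y = dual_space.

(* unary term w = [:: f1; ...; fn] interpreted as f1 o ... o fn *)
Definition uterm_dual (w : seq F) (x : {ffun L -> bool}) : {ffun L -> bool} :=
  foldr dual_op x w.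

Definition uterm_constant_on_dual (w : seq F) : Prop :=
  forall x y, x \in dual_space -> y \in dual_space ->
    uterm_dual w x = uterm_dual w y.

End Alg.
End Cornish.

(* Main.v *)
From Stdlib Require ClassicalEpsilon.
Require Import Defs.
From HB Require Import structures.
From mathcomp Require Import all_boot all_order.
Set Implicit Arguments. Unset Strict Implicit. Unset Printing Implicit Defensive.
Import Order.Theory.
Local Open Scope order_scope.

Lemma dualP {d} {L : finTBDistrLatticeType d} (x : {ffun L -> bool}) :
  x \in dual_space <->
  [/\ forall a b, x (a `&` b) = x a && x b,
      forall a b, x (a `|` b) = x a || x b,
      x \bot = false & x \top = true].
Proof.
rewrite inE; split.
  case/and4P => /forallP H1 /forallP H2 /eqP H3 /eqP H4; split => //.
    by move=> a b; apply/eqP; move: (H1 a) => /forallP.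
  by move=> a b; apply/eqP; move: (H2 a) => /forallP.
case=> H1 H2 H3 H4; apply/and4P; split; try by apply/eqP.
  by apply/forallP => a; apply/forallP => b; apply/eqP.
by apply/forallP => a; apply/forallP => b; apply/eqP.
Qed.

Lemma sep_le {d} {L : finTBDistrLatticeType d} (a b : L) :
  ~~ (a <= b) -> exists x, x \in dual_space /\ x a = true /\ x b = false.
Proof.
move=> hab.
pose P := fun n => [exists e : L, [&& e <= a, ~~ (e <= b) & #|[set y | y < e]| == n]].
have exP : exists n, P n.
  by exists #|[set y | y < a]|; apply/existsP; exists a; rewrite lexx hab eqxx.
case: (ex_minnP exP) => m /existsP [j /and3P [hja hjb /eqP hm]] hmin.
have minj : forall y, y < j -> y <= a -> y <= b.
  move=> y hy hya; apply/negPn/negP => hyb.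
  have : (m <= #|[set z | (z < y)%O]|)%N.
    by apply: hmin; apply/existsP; exists y; rewrite hya hyb eqxx.
  rewrite -hm leqNgt => /negP; apply; apply: proper_card.
  apply/properP; split.
    by apply/subsetP => z; rewrite !inE => hz; apply: lt_trans hz hy.
  by exists y; rewrite !inE ?hy ?ltxx.
exists [ffun e => j <= e]; split; last by rewrite !ffunE hja (negbTE hjb).
apply/dualP; split.
- by move=> u v; rewrite !ffunE lexI.
- move=> u v; rewrite !ffunE; apply/idP/idP; last first.
    by case/orP => h; [apply: le_trans h (leUl _ _)|apply: le_trans h (leUr _ _)].
  move=> h; apply/negPn/negP; rewrite negb_or => /andP [hu hv].
  have hju : j `&` u <= b.
    apply: minj; last by apply: le_trans (leIl _ _) hja.
    by rewrite lt_neqAle leIl andbT; apply/negP => /eqP e; case/negP: hu; rewrite -e leIr.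
  have hjv : j `&` v <= b.
    apply: minj; last by apply: le_trans (leIl _ _) hja.
    by rewrite lt_neqAle leIl andbT; apply/negP => /eqP e; case/negP: hv; rewrite -e leIr.
  case/negP: hjb.
  have -> : j = (j `&` u) `|` (j `&` v) by rewrite -meetUr; apply/esym/meet_idPl.
  by rewrite leUx hju hjv.
- rewrite ffunE; apply/negP => h; case/negP: hjb; apply: le_trans h (le0x _).
- by rewrite ffunE lex1.
Qed.

Lemma sep_neq {d} {L : finTBDistrLatticeType d} (a b : L) :
  a <> b -> exists x, x \in dual_space /\ x a <> x b.
Proof.
move=> hab.
case hle: (a <= b).
  case hle2: (b <= a); first by case: hab; apply/le_anti; rewrite hle hle2.
  have [x [hx [h1 h2]]] := sep_le (negbT hle2).
  by exists x; split => //; rewrite h1 h2.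
have [x [hx [h1 h2]]] := sep_le (negbT hle).
by exists x; split => //; rewrite h1 h2.
Qed.
Definition aeval {F : Type} {d} {L : finTBDistrLatticeType d} (op : F -> L -> L)
  (l : seq F) (a : L) : L := foldl (fun b f => op f b) a l.

Definition par {F : Type} (pos : F -> bool) (l : seq F) : bool :=
  foldr (fun f b => ~~ pos f (+) b) false l.

Lemma aeval_dual {F : Type} (pos : F -> bool) {d} {L : finTBDistrLatticeType d}
  (op : F -> L -> L) (l : seq F) (x : {ffun L -> bool}) (a : L) :
  x (aeval op l a) = uterm_dual pos op l x a (+) par pos l.
Proof.
elim: l a => [|f l IH] a /=; first by rewrite addbF.
rewrite IH /dual_op ffunE.
by case: (pos f) => /=; case: (uterm_dual pos op l x (op f a)); case: (par pos l).
Qed.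

Lemma dual_op_dual {F : Type} (pos : F -> bool) {d} {L : finTBDistrLatticeType d}
  (op : F -> L -> L) (Hc : is_cornish pos op) f x :
  x \in dual_space -> dual_op pos op f x \in dual_space.
Proof.
move=> /dualP [h1 h2 h3 h4]; apply/dualP; rewrite /dual_op.
have := Hc f; case: (pos f) => -[c1 c2 c3 c4]; split => *; rewrite !ffunE ?c1 ?c2 ?c3 ?c4 //=;
  by rewrite ?h1 ?h2 ?h3 ?h4 ?negb_or ?negb_and.
Qed.

Lemma uterm_dual_dual {F : Type} (pos : F -> bool) {d} {L : finTBDistrLatticeType d}
  (op : F -> L -> L) (Hc : is_cornish pos op) l x :
  x \in dual_space -> uterm_dual pos op l x \in dual_space.
Proof. by move=> hx; elim: l => [|f l IH] //=; apply: dual_op_dual. Qed.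

Lemma aeval01 {F : Type} (pos : F -> bool) {d} {L : finTBDistrLatticeType d}
  (op : F -> L -> L) (l : seq F) :
  uterm_constant_on_dual pos op l ->
  forall a, aeval op l a = \bot \/ aeval op l a = \top.
Proof.
move=> hc a; set v := aeval op l a.
case: (eqVneq v \top) => [->|hv]; first by right.
have hnt : ~~ (\top <= v) by rewrite le1x.
have [x0 [hx0 [h1 h2]]] := sep_le hnt.
left; apply/eqP; rewrite -lex0; apply/negPn/negP => hv0.
have [x1 [hx1 [h3 h4]]] := sep_le hv0.
move: h2 h3; rewrite /v !(aeval_dual pos) (hc x0 x1) //= => ->; done.
Qed.
Definition decide (P : Prop) : bool :=
  if ClassicalEpsilon.excluded_middle_informative P then true else false.

Lemma decideP (P : Prop) : decide P = true <-> P.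
Proof. by rewrite /decide; case: ClassicalEpsilon.excluded_middle_informative. Qed.

Lemma uterm_cat {F : Type} (pos : F -> bool) {d} {L : finTBDistrLatticeType d}
  (op : F -> L -> L) s w x :
  uterm_dual pos op (s ++ w) x = uterm_dual pos op s (uterm_dual pos op w x).
Proof. by rewrite /uterm_dual foldr_cat. Qed.

Lemma orbit_all {F : Type} (pos : F -> bool) {d} {L : finTBDistrLatticeType d}
  (op : F -> L -> L) (Hc : is_cornish pos op)
  (H1 : no_proper_nonempty_substructure pos op) (w : seq F)
  (hw : uterm_constant_on_dual pos op w) (x0 y : {ffun L -> bool}) :
  x0 \in dual_space -> y \in dual_space ->
  exists s, forall z, z \in dual_space -> uterm_dual pos op (s ++ w) z = y.
Proof.
move=> hx0 hy.
pose c := uterm_dual pos op w x0.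
have hc : c \in dual_space by apply: uterm_dual_dual.
pose O := [set y in dual_space | decide (exists s, uterm_dual pos op s c = y)].
have hO : substructure pos op O.
  split; first by apply/subsetP => z; rewrite inE => /andP [].
  move=> f z; rewrite [z \in _]in_set => /andP [hz /decideP [s hs]].
  rewrite [_ \in _]in_set (dual_op_dual Hc f hz) /=.
  by apply/decideP; exists (f :: s); rewrite /= -hs.
case: (H1 _ hO) => hO'.
  have : c \in O by rewrite [_ \in _]in_set hc /=; apply/decideP; exists [::].
  by rewrite hO' in_set0.
have : y \in O by rewrite hO'.
rewrite [_ \in _]in_set => /andP [_ /decideP [s hs]].
exists s => z hz; rewrite uterm_cat (hw z x0) //.
Qed.

Lemma sep_lists {F : Type} (pos : F -> bool) {d} {L : finTBDistrLatticeType d}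
  (op : F -> L -> L) (Hc : is_cornish pos op)
  (H1 : no_proper_nonempty_substructure pos op) (w : seq F)
  (hw : uterm_constant_on_dual pos op w) (a b : L) :
  a <> b -> exists s, aeval op (s ++ w) a <> aeval op (s ++ w) b.
Proof.
move=> hab; have [y [hy hyab]] := sep_neq hab.
have [s hs] := orbit_all Hc H1 hw hy hy.
exists s => heq; apply: hyab.
have := congr1 y heq; rewrite !(aeval_dual pos) hs //.
by move/addIb.
Qed.

Lemma collect {T : eqType} {A : Type} (P : T -> seq A -> Prop)
  (Pmono : forall t S S', (forall s, List.In s S -> List.In s S') -> P t S -> P t S')
  (r : seq T) :
  (forall t, t \in r -> exists S, P t S) -> exists S, forall t, t \in r -> P t S.
Proof.
elim: r => [|t r IH] h; first by exists [::].
have [S1 h1] := h t (mem_head _ _).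
have [S2 h2] : exists S, forall t, t \in r -> P t S.
  by apply: IH => u hu; apply: h; rewrite inE hu orbT.
exists (S1 ++ S2) => u; rewrite inE => /orP [/eqP ->|hu].
  by apply: Pmono h1 => s hs; apply: List.in_or_app; left.
by apply: Pmono (h2 _ hu) => s hs; apply: List.in_or_app; right.
Qed.
Definition tlist {F V : Type} (l : seq F) (t : term F V) : term F V :=
  foldl (fun t f => tOp f t) t l.

Lemma teval_tlist {F : Type} {d} {L : finTBDistrLatticeType d} (op : F -> L -> L)
  {V : Type} (e : V -> L) l t :
  teval op e (tlist l t) = aeval op l (teval op e t).
Proof. by elim: l t => [|f l IH] t //=; rewrite IH. Qed.

Lemma subalg2_aeval {F : Type} {d} {L : finTBDistrLatticeType d} (op : F -> L -> L)
  (S : {set L * L}) (hS : subalg2 op S) l p :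
  p \in S -> (aeval op l p.1, aeval op l p.2) \in S.
Proof.
case: hS => _ _ _ _ hf.
elim: l p => [|f l IH] p hp /=; first by case: p hp.
exact: (IH (op f p.1, op f p.2) (hf f p hp)).
Qed.

Lemma subalg_fst {F : Type} {d} {L : finTBDistrLatticeType d} (op : F -> L -> L)
  (S : {set L * L}) (hS : subalg2 op S) : subalg op [set p.1 | p in S].
Proof.
case: hS => h0 h1 hm hj hf; split.
- by apply/imsetP; exists (\bot, \bot).
- by apply/imsetP; exists (\top, \top).
- move=> a b /imsetP [p hp ->] /imsetP [q hq ->]; apply/imsetP.
  by exists (p.1 `&` q.1, p.2 `&` q.2); [apply: hm|].
- move=> a b /imsetP [p hp ->] /imsetP [q hq ->]; apply/imsetP.
  by exists (p.1 `|` q.1, p.2 `|` q.2); [apply: hj|].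
- move=> f a /imsetP [p hp ->]; apply/imsetP.
  by exists (op f p.1, op f p.2); [apply: hf|].
Qed.

Lemma subalg_snd {F : Type} {d} {L : finTBDistrLatticeType d} (op : F -> L -> L)
  (S : {set L * L}) (hS : subalg2 op S) : subalg op [set p.2 | p in S].
Proof.
case: hS => h0 h1 hm hj hf; split.
- by apply/imsetP; exists (\bot, \bot).
- by apply/imsetP; exists (\top, \top).
- move=> a b /imsetP [p hp ->] /imsetP [q hq ->]; apply/imsetP.
  by exists (p.1 `&` q.1, p.2 `&` q.2); [apply: hm|].
- move=> a b /imsetP [p hp ->] /imsetP [q hq ->]; apply/imsetP.
  by exists (p.1 `|` q.1, p.2 `|` q.2); [apply: hj|].
- move=> f a /imsetP [p hp ->]; apply/imsetP.
  by exists (op f p.1, op f p.2); [apply: hf|].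
Qed.

Lemma majority {F : Type} {d} {L : finTBDistrLatticeType d} (op : F -> L -> L) :
  exists m, is_majority_term op m.
Proof.
pose x := @tVar F 'I_3 (Ordinal (isT : 0 < 3)).
pose y := @tVar F 'I_3 (Ordinal (isT : 1 < 3)).
pose z := @tVar F 'I_3 (Ordinal (isT : 2 < 3)).
exists (tJoin (tJoin (tMeet x y) (tMeet y z)) (tMeet z x)) => a b /=.
split; rewrite /env3 /=.
- by rewrite meetxx meetKU (meetC b) meetKU.
- by rewrite meetxx (meetC b) joinxx joinC meetKU.
- by rewrite meetxx -joinA (joinC a) joinA (meetC b) joinxx joinC meetKU.
Qed.
Lemma eqt_val {d} {L : finTBDistrLatticeType d} (g : L -> L)
  (hg0 : g \bot = \top) (hg1 : g \top = \bot) (u v : L)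
  (hu : u = \bot \/ u = \top) (hv : v = \bot \/ v = \top) :
  (u `&` v) `|` (g u `&` g v) = if u == v then \top else \bot.
Proof.
case: hu => ->; case: hv => ->; rewrite ?hg0 ?hg1 ?eqxx ?meetxx ?join0x ?joinx0 //.
- case: eqVneq => [e|_]; last by rewrite meet0x meetx0 joinxx.
  by rewrite meet0x meetx0 joinxx e.
- case: eqVneq => [e|_]; last by rewrite meet0x meetx0 joinxx.
  by rewrite meet0x meetx0 joinxx e.
Qed.

Definition eqt {F V : Type} (g : F) (p q : term F V) : term F V :=
  tJoin (tMeet p q) (tMeet (tOp g p) (tOp g q)).

Definition tx {F : Type} := @tVar F 'I_3 (Ordinal (isT : 0 < 3)).
Definition ty {F : Type} := @tVar F 'I_3 (Ordinal (isT : 1 < 3)).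
Definition tz {F : Type} := @tVar F 'I_3 (Ordinal (isT : 2 < 3)).

Definition dterm {F : Type} (g : F) (w : seq F) (S : seq (seq F)) : term F 'I_3 :=
  foldr (fun s acc => tMeet (eqt g (tlist (s ++ w) tx) (tlist (s ++ w) ty)) acc) (@tTop F 'I_3) S.

Lemma dterm_val {F : Type} {d} {L : finTBDistrLatticeType d} (op : F -> L -> L)
  (g : F) (hg0 : op g \bot = \top) (hg1 : op g \top = \bot) (w : seq F)
  (h01 : forall s a, aeval op (s ++ w) a = \bot \/ aeval op (s ++ w) a = \top)
  (S : seq (seq F))
  (hS : forall a b : L, a <> b -> exists s, List.In s S /\ aeval op (s ++ w) a <> aeval op (s ++ w) b)
  (a b c : L) :
  teval op (env3 a b c) (dterm g w S) = if a == b then \top else \bot.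
Proof.
have comp : forall s,
   (teval op (env3 a b c) (tlist (s ++ w) tx) `&` teval op (env3 a b c) (tlist (s ++ w) ty))
   `|` (op g (teval op (env3 a b c) (tlist (s ++ w) tx)) `&` op g (teval op (env3 a b c) (tlist (s ++ w) ty)))
   = if aeval op (s ++ w) a == aeval op (s ++ w) b then \top else \bot.
  move=> s; rewrite !teval_tlist /=.
  exact: (eqt_val (g := op g)).
case: eqVneq => [e|hab]; first subst b.
  elim: S {hS} => [|s S IH] //=; by rewrite comp eqxx IH meetxx.
have [s0 [hin hne]] := hS a b (elimN eqP hab).
elim: S hin {hS} => [|s S IH] //= [->|hin].
  by rewrite comp (introF eqP hne) meet0x.
by rewrite IH // meetx0.
Qed.
Theorem corollary5p12 (F : Type) (pos : F -> bool) (I : finType)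
  (d : I -> Order.disp_t) (L : forall i : I, finTBDistrLatticeType (d i))
  (op : forall i : I, F -> L i -> L i)
  (Hcornish : forall i, is_cornish pos (op i))
  (H1 : forall i, no_proper_nonempty_substructure pos (op i))
  (H2 : exists f : F, pos f = false)
  (H3 : exists w : seq F, 0 < size w /\
          forall i, uterm_constant_on_dual pos (op i) w) :
  (forall i, semi_primal (op i)) /\
  (exists t : term F 'I_3, forall i, is_discriminator_term (op i) t).
Proof.
case: H2 => g hg; case: H3 => w [_ hw].
have hg01 : forall i, op i g \bot = \top /\ op i g \top = \bot.
  by move=> i; have := Hcornish i g; rewrite hg => -[].
have h01 : forall i s a, aeval (op i) (s ++ w) a = \bot \/ aeval (op i) (s ++ w) a = \top.
  move=> i s; apply: (aeval01 (pos := pos)) => x y hx hy.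
  by rewrite !uterm_cat (hw i x y).
pose Sep i S := forall a b : L i, a <> b ->
  exists s, List.In s S /\ aeval (op i) (s ++ w) a <> aeval (op i) (s ++ w) b.
have Sepmono : forall i S S', (forall s, List.In s S -> List.In s S') -> Sep i S -> Sep i S'.
  move=> i S S' hSS' h a b hab; have [s [hs hne]] := h a b hab.
  by exists s; split => //; apply: hSS'.
have sepI : forall i, exists S, Sep i S.
  move=> i.
  pose P := fun (t : L i * L i) S => t.1 <> t.2 ->
       exists s, List.In s S /\ aeval (op i) (s ++ w) t.1 <> aeval (op i) (s ++ w) t.2.
  have [S hS] : exists S, forall t, t \in enum {: L i * L i} -> P t S.
    apply: collect.
      move=> t S S' hSS' h hne; have [s [hs hn]] := h hne.
      by exists s; split => //; apply: hSS'.
    move=> [a b] _.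
    case: (eqVneq a b) => [e|hab]; first by exists [::] => /=.
    have [s hs] := sep_lists (Hcornish i) (H1 i) (hw i) (elimN eqP hab).
    by exists [:: s] => _; exists s; split => //; left.
  by exists S => a b hab; apply: (hS (a, b)); rewrite ?mem_enum.
have [S hS] := @collect I _ Sep Sepmono (enum I) (fun i _ => sepI i).
have hSi : forall i, Sep i S by move=> i; apply: hS; rewrite mem_enum.
split.
  move=> i; split; first exact: majority.
  move=> T hT.
  case: (boolP [exists p in T, p.1 != p.2]) => hex; last first.
    right; exists [set p.1 | p in T]; split; first exact: subalg_fst.
    apply/setP => -[a b]; apply/idP/idP.
      move=> hab; have := hex; rewrite negb_exists_in => /forall_inP /(_ _ hab) /negPn /= /eqP eab.
      subst b; apply/imsetP; exists a => //; apply/imsetP; by exists (a, a).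
    case/imsetP => c /imsetP [p hp ->] [-> ->].
    have := hex; rewrite negb_exists_in => /forall_inP /(_ _ hp) /negPn /eqP e.
    by case: p hp e => p1 p2 /= hp e; rewrite {2}e.
  left; exists [set p.1 | p in T], [set p.2 | p in T]; split.
  - exact: subalg_fst.
  - exact: subalg_snd.
  case/exists_inP: hex => p hp hne.
  have [s [_ hs]] := hSi i _ _ (elimN eqP hne).
  have hu := subalg2_aeval hT (s ++ w) hp.
  have [g0 g1] := hg01 i.
  case: hT => h0 h1 hm hj hf.
  have [h10 h01'] : (\top, \bot) \in T /\ (\bot, \top) \in T.
    case: (h01 i s p.1) hs hu => ->; case: (h01 i s p.2) => -> // _ hu.
    + split => //; by have := hf g _ hu; rewrite /= g0 g1.
    + split => //; by have := hf g _ hu; rewrite /= g0 g1.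
  apply/setP => -[a b]; apply/idP/idP.
    by move=> hab; rewrite in_setX /=; apply/andP; split; apply/imsetP; exists (a, b).
  rewrite in_setX /= => /andP [/imsetP [q hq ->] /imsetP [r hr ->]].
  have := hj _ _ (hm _ _ hq h10) (hm _ _ hr h01').
  by rewrite /= !meetx1 !meetx0 joinx0 join0x.
exists (tJoin (tMeet (dterm g w S) tz) (tMeet (tOp g (dterm g w S)) tx)) => i a b c /=.
have [g0 g1] := hg01 i.
rewrite (dterm_val g0 g1 (h01 i) (hSi i)).
case: eqVneq => _ /=.
  by rewrite meet1x g1 meet0x joinx0.
by rewrite meet0x g0 meet1x join0x.
Qed.
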